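(* Let $(X,d)$ be a complete metric space and $\{f_{\eta_k}:\eta_k\in B^{[k]},k\in\mathbb{N}\}$ a binary tree of continuous maps $X\to X$ sharing a common nonempty compact invariant set $C\subseteq X$ (i.e. $f_{\eta_k}(C)\subseteq C$ for all $\eta_k$), each $f_{\eta_k}$ Lipschitz with constant $s_{\eta_k}$. Assume there is a sequence $(\delta_k)$ with $\sum_{k=1}^\infty\delta_k<\infty$ such that $$\prod_{i=1}^k s_{\tau_i\eta}\le\delta_k\quad\text{for all }\eta\in B^{[\infty]},\ k\in\mathbb{N}.$$ Then for every $x\in C$, $$U_{TM}=\lim_{k\to\infty}\bigcup_{\eta\in B^{[\infty]}}f_{\tau_1\eta}\circ\cdots\circ f_{\tau_{k-1}\eta}\circ f_{\tau_k\eta}(x),$$ where the limit is taken in the Hausdorff metric $h$ on the nonempty compact subsets of $X$, and $U_{TM}=\bigcup_{\eta\in B^{[\infty]}}\gamma(\eta)$ with $\gamma(\eta)=\lim_{k\to\infty}f_{\tau_1\eta}\circ\cdots\circ f_{\tau_k\eta}(x)$.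
   Context: $B^{[k]}=\{1,2\}^k$, $B^{[\infty]}=\{1,2\}^{\mathbb{N}}$, and $\tau_\ell\eta$ denotes the first $\ell$ symbols of $\eta$. A binary tree of maps assigns to each finite code $\eta_k$ a continuous map $f_{\eta_k}:X\to X$. $h$ denotes the Hausdorff metric on the space $\mathbb{H}(X)$ of nonempty compact subsets of $X$. *)

(* Defs.v *)
From Stdlib Require Import Reals Lra List Classical ClassicalEpsilon.
Open Scope R_scope.

Record is_metric {X : Type} (d : X -> X -> R) : Prop := {
  md_nonneg : forall x y, 0 <= d x y;
  md_eq0    : forall x y, d x y = 0 <-> x = y;
  md_sym    : forall x y, d x y = d y x;
  md_tri    : forall x y z, d x z <= d x y + d y z }.

Definition converges {X : Type} (d : X -> X -> R) (u : nat -> X) (l : X) : Prop :=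
  forall eps, eps > 0 -> exists N, forall n, (n >= N)%nat -> d (u n) l < eps.

Definition cauchy {X : Type} (d : X -> X -> R) (u : nat -> X) : Prop :=
  forall eps, eps > 0 -> exists N, forall n m, (n >= N)%nat -> (m >= N)%nat ->
    d (u n) (u m) < eps.

Definition complete_metric {X : Type} (d : X -> X -> R) : Prop :=
  forall u, cauchy d u -> exists l, converges d u l.

Definition is_open {X : Type} (d : X -> X -> R) (O : X -> Prop) : Prop :=
  forall x, O x -> exists r, r > 0 /\ forall y, d x y < r -> O y.

Definition compact_set {X : Type} (d : X -> X -> R) (K : X -> Prop) : Prop :=
  forall (I : Type) (O : I -> X -> Prop),
    (forall i, is_open d (O i)) ->
    (forall x, K x -> exists i, O i x) ->
    exists l : list I, forall x, K x -> exists i, In i l /\ O i x.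

Definition continuous_map {X : Type} (d : X -> X -> R) (f : X -> X) : Prop :=
  forall x eps, eps > 0 -> exists delta, delta > 0 /\
    forall y, d x y < delta -> d (f x) (f y) < eps.

Definition lipschitz {X : Type} (d : X -> X -> R) (f : X -> X) (s : R) : Prop :=
  0 <= s /\ forall x y, d (f x) (f y) <= s * d x y.

(** Supremum / infimum of a set of reals (0 if no least upper bound exists). *)
Definition Rsup (E : R -> Prop) : R :=
  match excluded_middle_informative (exists m, is_lub E m) with
  | left H => proj1_sig (constructive_indefinite_description _ H)
  | right _ => 0
  end.
Definition Rinf (E : R -> Prop) : R := - Rsup (fun r => E (- r)).

Definition dist_pt_set {X : Type} (d : X -> X -> R) (x : X) (B : X -> Prop) : R :=
  Rinf (fun r => exists b, B b /\ r = d x b).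
Definition excess {X : Type} (d : X -> X -> R) (A B : X -> Prop) : R :=
  Rsup (fun r => exists a, A a /\ r = dist_pt_set d a B).
Definition hausdorff {X : Type} (d : X -> X -> R) (A B : X -> Prop) : R :=
  Rmax (excess d A B) (excess d B A).

(** Codes: symbols {1,2} are represented by bool; an infinite code is
    eta : nat -> bool, and tau k eta is the list of its first k symbols. *)
Definition tau (k : nat) (eta : nat -> bool) : list bool := map eta (seq 0 k).

(** tree_comp f eta k x = f_{tau_1 eta} o ... o f_{tau_k eta} (x). *)
Fixpoint tree_comp {X : Type} (f : list bool -> X -> X) (eta : nat -> bool) (k : nat) (x : X) : X :=
  match k with
  | O => x
  | S k' => tree_comp f eta k' (f (tau (S k') eta) x)
  end.

Fixpoint prefprod (s : list bool -> R) (eta : nat -> bool) (k : nat) : R :=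
  match k with
  | O => 1
  | S k' => prefprod s eta k' * s (tau (S k') eta)
  end.

(* Main.v *)
Require Import Defs.
From Stdlib Require Import Reals List Lra Lia Classical ClassicalEpsilon.
Open Scope R_scope.

Lemma tau_length k eta : length (tau k eta) = k.
Proof. unfold tau. rewrite length_map, length_seq. reflexivity. Qed.

Lemma tc_S {X : Type} (f : list bool -> X -> X) eta k y :
  tree_comp f eta (S k) y = tree_comp f eta k (f (tau (S k) eta) y).
Proof. reflexivity. Qed.

Lemma pp_nonneg (s : list bool -> R) (Hs : forall w, (length w >= 1)%nat -> 0 <= s w) eta k :
  0 <= prefprod s eta k.
Proof.
  induction k; simpl; [lra|]. apply Rmult_le_pos; auto. apply Hs. rewrite tau_length; lia.
Qed.

Lemma tc_lip {X : Type} (d : X -> X -> R) f s :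
  (forall w, (length w >= 1)%nat -> lipschitz d (f w) (s w)) ->
  forall eta k y z, d (tree_comp f eta k y) (tree_comp f eta k z) <= prefprod s eta k * d y z.
Proof.
  intros Hl eta k. induction k; intros y z.
  - simpl. lra.
  - rewrite !tc_S. eapply Rle_trans; [apply IHk|].
    destruct (Hl (tau (S k) eta)) as [Hs0 Hlip]; [rewrite tau_length; lia|].
    specialize (Hlip y z). simpl prefprod. rewrite Rmult_assoc.
    apply Rmult_le_compat_l; [|exact Hlip].
    apply pp_nonneg. intros w Hw. exact (proj1 (Hl w Hw)).
Qed.

Lemma tc_agree {X : Type} (f : list bool -> X -> X) : forall n e1 e2 y,
  (forall i, (i < n)%nat -> e1 i = e2 i) -> tree_comp f e1 n y = tree_comp f e2 n y.
Proof.
  induction n; intros e1 e2 y H; [reflexivity|].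
  rewrite !tc_S.
  assert (Ht : tau (S n) e1 = tau (S n) e2).
  { unfold tau. apply map_ext_in. intros i Hi. apply in_seq in Hi. apply H; lia. }
  rewrite Ht. apply IHn. intros; apply H; lia.
Qed.

Lemma compact_bounded {X : Type} (d : X -> X -> R) (C : X -> Prop) :
  is_metric d -> compact_set d C -> forall c, C c ->
  exists D, 0 <= D /\ forall a b, C a -> C b -> d a b <= D.
Proof.
  intros Hm Hc c Hcc.
  destruct (Hc X (fun y z => d y z < 1)) as [l Hl].
  - intros y z Hz. exists (1 - d y z). split; [lra|]. intros w Hw.
    pose proof (md_tri _ Hm y z w). lra.
  - intros z Hz. exists z. rewrite (proj2 (md_eq0 _ Hm z z) eq_refl). lra.
  - set (M := fold_right (fun y acc => Rmax (d c y) acc) 0 l).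
    assert (HM: forall y, In y l -> d c y <= M).
    { subst M. clear. induction l; simpl; intros y Hy; [contradiction|].
      destruct Hy as [<-|Hy]. apply Rmax_l.
      eapply Rle_trans; [apply IHl; exact Hy| apply Rmax_r]. }
    assert (Hca: forall a, C a -> d c a <= M + 1).
    { intros a Ha. destruct (Hl a Ha) as [y [Hy Hya]].
      pose proof (md_tri _ Hm c y a). pose proof (HM y Hy). lra. }
    exists (2*(M+1)). split.
    + pose proof (Hca c Hcc). pose proof (md_nonneg _ Hm c c). lra.
    + intros a b Ha Hb. pose proof (md_tri _ Hm a c b). pose proof (md_sym _ Hm a c).
      pose proof (Hca a Ha); pose proof (Hca b Hb). lra.
Qed.

Fixpoint Qs (delta : nat -> R) (m j : nat) : R :=
  match j with O => 0 | S j' => Qs delta m j' + delta (m + j')%nat end.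

Lemma Qs_eq delta m j : Qs delta (S (S m)) j =
  sum_f_R0 (fun i => delta (S i)) (m + j) - sum_f_R0 (fun i => delta (S i)) m.
Proof.
  induction j.
  - simpl. rewrite Nat.add_0_r. ring.
  - simpl Qs. rewrite IHj. rewrite Nat.add_succ_r, tech5.
    replace (S (S m) + j)%nat with (S (S (m + j))) by lia. ring.
Qed.

Lemma Rsup_le (E : R -> Prop) M : 0 <= M -> (forall r, E r -> r <= M) -> Rsup E <= M.
Proof.
  intros HM HE. unfold Rsup. destruct (excluded_middle_informative _) as [H|H]; [|lra].
  destruct (constructive_indefinite_description _ H) as [m Hm]. simpl.
  apply (proj2 Hm). intros r Hr. apply HE; exact Hr.
Qed.

Lemma Rinf_le (E : R -> Prop) a : (forall r, E r -> 0 <= r) -> E a -> Rinf E <= a.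
Proof.
  intros H0 Ha. unfold Rinf, Rsup. destruct (excluded_middle_informative _) as [H|H].
  - destruct (constructive_indefinite_description _ H) as [m Hm]. simpl.
    assert (-a <= m). { apply (proj1 Hm). rewrite Ropp_involutive. exact Ha. } lra.
  - exfalso. apply H. destruct (completeness (fun r => E (- r))) as [m Hm].
    + exists 0. intros r Hr. pose proof (H0 _ Hr). lra.
    + exists (- a). rewrite Ropp_involutive. exact Ha.
    + exists m; exact Hm.
Qed.

Lemma dist_le {X : Type} (d : X -> X -> R) (Hm : is_metric d) (B : X -> Prop) a b :
  B b -> dist_pt_set d a B <= d a b.
Proof.
  intros Hb. unfold dist_pt_set. apply Rinf_le.
  - intros r [b' [_ ->]]. apply md_nonneg; exact Hm.
  - exists b. split; auto.
Qed.

Fixpoint iterg (g : nat -> (nat -> bool) -> (nat -> bool)) (e0 : nat -> bool) (n : nat) :=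
  match n with O => e0 | S n' => g n' (iterg g e0 n') end.

Theorem mainTheorem3 (X : Type) (d : X -> X -> R)
  (f : list bool -> X -> X) (s : list bool -> R) (C : X -> Prop) (delta : nat -> R) :
  is_metric d ->
  complete_metric d ->
  compact_set d C -> (exists c, C c) ->
  (forall w, (length w >= 1)%nat -> continuous_map d (f w)) ->
  (forall w, (length w >= 1)%nat -> forall x, C x -> C (f w x)) ->
  (forall w, (length w >= 1)%nat -> lipschitz d (f w) (s w)) ->
  (exists l, Un_cv (fun n => sum_f_R0 (fun i => delta (S i)) n) l) ->
  (forall (eta : nat -> bool) (k : nat), (k >= 1)%nat -> prefprod s eta k <= delta k) ->
  forall x, C x ->
    (forall eta : nat -> bool, exists y, converges d (fun k => tree_comp f eta k x) y) /\
    let U := fun y => exists eta : nat -> bool, converges d (fun k => tree_comp f eta k x) y in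
    compact_set d U /\ (exists u, U u) /\
    forall eps, eps > 0 -> exists N, forall k, (k >= N)%nat ->
      hausdorff d (fun y => exists eta : nat -> bool, y = tree_comp f eta k x) U < eps.
Proof.
  intros Hm Hcomplete Hc HC Hcont Hinv Hlip Hser Hdel x Hx.
  assert (Hs: forall w, (length w >= 1)%nat -> 0 <= s w) by (intros w Hw; exact (proj1 (Hlip w Hw))).
  destruct (compact_bounded d C Hm Hc x Hx) as [D [HD0 HD]].
  assert (Hstep: forall eta k, (k >= 1)%nat ->
    d (tree_comp f eta (S k) x) (tree_comp f eta k x) <= D * delta k).
  { intros eta k Hk. rewrite tc_S. eapply Rle_trans; [apply (tc_lip d f s Hlip)|].
    assert (Hw : (length (tau (S k) eta) >= 1)%nat) by (rewrite tau_length; lia).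
    pose proof (HD _ x (Hinv _ Hw x Hx) Hx) as H1.
    pose proof (Hdel eta k Hk) as H2. pose proof (pp_nonneg s Hs eta k) as H3.
    eapply Rle_trans. apply Rmult_le_compat_l; [exact H3| exact H1].
    rewrite (Rmult_comm D). apply Rmult_le_compat_r; [exact HD0|exact H2]. }
  assert (Hchain: forall eta m j, (m >= 1)%nat ->
    d (tree_comp f eta (m + j) x) (tree_comp f eta m x) <= D * Qs delta m j).
  { intros eta m j Hm1. induction j.
    - rewrite Nat.add_0_r. rewrite (proj2 (md_eq0 _ Hm _ _) eq_refl). simpl. lra.
    - rewrite Nat.add_succ_r. pose proof (Hstep eta (m + j)%nat ltac:(lia)).
      pose proof (md_tri _ Hm (tree_comp f eta (S (m + j)) x) (tree_comp f eta (m + j) x)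
                    (tree_comp f eta m x)).
      simpl Qs. rewrite Rmult_plus_distr_l. lra. }
  assert (Hcauchy : Cauchy_crit (fun n => sum_f_R0 (fun i => delta (S i)) n)).
  { apply CV_Cauchy. destruct (constructive_indefinite_description _ Hser) as [l Hl].
    exists l; exact Hl. }
  assert (Hunif: forall eps, eps > 0 -> exists N, forall m j eta, (m >= N)%nat ->
    d (tree_comp f eta (m + j) x) (tree_comp f eta m x) < eps).
  { intros eps He. set (e' := eps / (D + 1)).
    assert (He' : e' > 0) by (unfold e'; apply Rdiv_lt_0_compat; lra).
    destruct (Hcauchy e' He') as [N0 HN0].
    exists (S (S N0)). intros m j eta Hm2. destruct m as [|[|m0]]; [lia|lia|].
    assert (Hq: Rabs (Qs delta (S (S m0)) j) < e').
    { rewrite Qs_eq. specialize (HN0 (m0 + j)%nat m0 ltac:(lia) ltac:(lia)).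
      unfold Rdist in HN0. exact HN0. }
    eapply Rle_lt_trans; [apply Hchain; lia|].
    assert (D * Qs delta (S (S m0)) j <= D * Rabs (Qs delta (S (S m0)) j))
      by (apply Rmult_le_compat_l; [lra|apply Rle_abs]).
    assert (D * Rabs (Qs delta (S (S m0)) j) <= D * e') by (apply Rmult_le_compat_l; lra).
    assert ((D + 1) * e' = eps) by (unfold e'; field; lra).
    lra. }
  assert (Hcv: forall eta, exists y, converges d (fun k => tree_comp f eta k x) y).
  { intros eta. apply Hcomplete. intros eps He.
    destruct (Hunif (eps / 2)) as [N HN]; [lra|]. exists N. intros n m Hn Hm2.
    pose proof (HN N (n - N)%nat eta ltac:(lia)) as H1.
    pose proof (HN N (m - N)%nat eta ltac:(lia)) as H2.
    replace (N + (n - N))%nat with n in H1 by lia.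
    replace (N + (m - N))%nat with m in H2 by lia.
    pose proof (md_tri _ Hm (tree_comp f eta n x) (tree_comp f eta N x) (tree_comp f eta m x)).
    pose proof (md_sym _ Hm (tree_comp f eta N x) (tree_comp f eta m x)).
    lra. }
  assert (Hunifcv: forall eps, eps > 0 -> exists N, forall m eta y, (m >= N)%nat ->
    converges d (fun k => tree_comp f eta k x) y -> d (tree_comp f eta m x) y < eps).
  { intros eps He. destruct (Hunif (eps / 2)) as [N HN]; [lra|]. exists N.
    intros m eta y Hm2 Hc2. destruct (Hc2 (eps / 2)) as [N1 HN1]; [lra|].
    specialize (HN1 (m + N1)%nat ltac:(lia)). cbv beta in HN1.
    specialize (HN m N1 eta Hm2).
    pose proof (md_tri _ Hm (tree_comp f eta m x) (tree_comp f eta (m + N1) x) y).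
    pose proof (md_sym _ Hm (tree_comp f eta m x) (tree_comp f eta (m + N1) x)).
    lra. }
  split; [exact Hcv|]. cbv zeta. split; [|split].
  -
    intros I O HO Hcov.
    set (good := fun (n : nat) (e : nat -> bool) => exists l : list I, forall y,
      (exists e', (forall i, (i < n)%nat -> e i = e' i) /\
          converges d (fun k => tree_comp f e' k x) y) -> exists i, In i l /\ O i y).
    apply NNPP; intro Hbad.
    assert (Hb0: ~ good 0%nat (fun _ => true)).
    { intros [l Hl']. apply Hbad. exists l. intros y [e' He']. apply Hl'.
      exists e'. split; [intros; lia|exact He']. }
    assert (Hstep2: forall n e, ~ good n e -> exists e',
      (forall i, (i < n)%nat -> e i = e' i) /\ ~ good (S n) e').
    { intros n e Hng. apply NNPP; intro Hall.
      set (upd := fun b : bool => fun i => if Nat.eqb i n then b else e i).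
      assert (Hg: forall b, good (S n) (upd b)).
      { intro b. apply NNPP. intro Hn'. apply Hall. exists (upd b). split; [|exact Hn'].
        intros i Hi. unfold upd. destruct (Nat.eqb_spec i n); [lia|reflexivity]. }
      destruct (Hg true) as [l1 H1]. destruct (Hg false) as [l2 H2].
      apply Hng. exists (l1 ++ l2). intros y [e' [Hag Hconv]].
      assert (Hag2 : forall i, (i < S n)%nat -> upd (e' n) i = e' i).
      { intros i Hi. unfold upd. destruct (Nat.eqb_spec i n). subst; auto. apply Hag; lia. }
      destruct (e' n) eqn:Hen.
      - destruct (H1 y) as [i0 [Hi0 Hoi]]. { exists e'. split; [exact Hag2|exact Hconv]. }
        exists i0; split; [apply in_or_app; left; exact Hi0|exact Hoi].
      - destruct (H2 y) as [i0 [Hi0 Hoi]]. { exists e'. split; [exact Hag2|exact Hconv]. }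
        exists i0; split; [apply in_or_app; right; exact Hi0|exact Hoi]. }
    assert (Hgex: exists g : nat -> (nat -> bool) -> (nat -> bool), forall n e, ~ good n e ->
      (forall i, (i < n)%nat -> e i = g n e i) /\ ~ good (S n) (g n e)).
    { exists (fun n e => match excluded_middle_informative (exists e',
        (forall i, (i < n)%nat -> e i = e' i) /\ ~ good (S n) e') with
        | left H => proj1_sig (constructive_indefinite_description _ H)
        | right _ => e end).
      intros n e Hn. destruct (excluded_middle_informative _) as [H|H].
      - destruct (constructive_indefinite_description _ H) as [e' He']. simpl. exact He'.
      - exfalso; apply H; apply Hstep2; auto. }
    destruct Hgex as [g Hg].
    set (es := iterg g (fun _ => true)).
    assert (Hbadn: forall n, ~ good n (es n)).
    { induction n; [exact Hb0|]. exact (proj2 (Hg n (es n) IHn)). }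
    assert (Hagr: forall m p i, (i < m)%nat -> es m i = es (m + p)%nat i).
    { intros m p i Hi. induction p.
      - rewrite Nat.add_0_r. reflexivity.
      - rewrite IHp, Nat.add_succ_r. apply (proj1 (Hg _ _ (Hbadn (m + p)%nat))). lia. }
    set (etas := fun i => es (S i) i).
    assert (Hetas: forall n i, (i < n)%nat -> etas i = es n i).
    { intros n i Hi. unfold etas. rewrite (Hagr (S i) (n - S i)%nat i ltac:(lia)).
      f_equal. lia. }
    destruct (Hcv etas) as [ys Hys].
    destruct (Hcov ys) as [i0 Hi0]. { exists etas; exact Hys. }
    destruct (HO i0 ys Hi0) as [r [Hr Hball]].
    destruct (Hunifcv (r / 2)) as [N HN]; [lra|].
    apply (Hbadn N). exists (i0 :: nil). intros y [e' [Hag Hconv]].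
    exists i0. split; [left; reflexivity|]. apply Hball.
    assert (Heq: tree_comp f etas N x = tree_comp f e' N x).
    { apply tc_agree. intros i Hi. rewrite (Hetas N i Hi). apply Hag; exact Hi. }
    pose proof (HN N etas ys ltac:(lia) Hys) as H1.
    pose proof (HN N e' y ltac:(lia) Hconv) as H2.
    pose proof (md_tri _ Hm ys (tree_comp f etas N x) y).
    pose proof (md_sym _ Hm ys (tree_comp f etas N x)).
    rewrite Heq in *. lra.
  - destruct (Hcv (fun _ => true)) as [y Hy]. exists y. exists (fun _ => true). exact Hy.
  - intros eps He. destruct (Hunifcv (eps / 2)) as [N HN]; [lra|]. exists N. intros k Hk.
    unfold hausdorff. apply Rmax_lub_lt.
    + unfold excess. apply Rle_lt_trans with (eps / 2); [|lra]. apply Rsup_le; [lra|].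
      intros r [a [[eta Ha] ->]]. subst a. destruct (Hcv eta) as [y Hy].
      eapply Rle_trans. apply (dist_le d Hm) with (b := y). exists eta; exact Hy.
      left; apply HN; auto.
    + unfold excess. apply Rle_lt_trans with (eps / 2); [|lra]. apply Rsup_le; [lra|].
      intros r [u [[eta Hu] ->]].
      apply Rle_trans with (d u (tree_comp f eta k x)).
      apply (dist_le d Hm). exists eta; reflexivity.
      rewrite (md_sym _ Hm). left; apply HN; auto.
Qed.
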